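(* Let $(B_k,\delta_k)_{k\ge1}$ be a sequence with $\delta_k\in(0,1/4)$, $B_k\ge1$ and $B_k/\log(\delta_k^{-1})\to\infty$. Then \[ d_{B_k;\delta_k}(e^{-x})\ge\big(\tfrac12+o(1)\big)\sqrt{B_k\log\big((2\delta_k)^{-1}\big)}\qquad(k\to\infty). \]
   Context: For real $B\ge1$, $\delta\in(0,1)$ and a function $f:[0,B]\to\mathbb{R}$, $d_{B;\delta}(f)$ denotes the minimum degree of a non-constant real polynomial $p$ satisfying $\sup_{x\in[0,B]}|p(x)-f(x)|<\delta$. Logarithms are natural. *)

(* Defs.v *)
From HB Require Import structures.
From mathcomp Require Import all_boot all_order all_algebra.
From mathcomp Require Import all_classical all_reals all_analysis.
Set Implicit Arguments. Unset Strict Implicit. Unset Printing Implicit Defensive.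
Import Order.TTheory GRing.Theory Num.Theory.
Local Open Scope classical_set_scope.
Local Open Scope ring_scope.

(* p approximates f on [0,B] with sup_{x in [0,B]} |p(x) - f(x)| < delta.
   "sup < delta" is written out as: some eta < delta bounds |p - f| on [0,B]. *)
Definition approx_on (R : realType) (B delta : R) (f : R -> R) (p : {poly R}) : Prop :=
  exists2 eta : R, eta < delta &
    forall x : R, 0 <= x <= B -> `|p.[x] - f x| <= eta.

Definition approx_degrees (R : realType) (B delta : R) (f : R -> R) : set R :=
  [set (n%:R : R) | n in [set n : nat | exists p : {poly R},
     (1 < size p)%N /\ (size p).-1 = n /\ approx_on B delta f p]].

Definition dmin (R : realType) (B delta : R) (f : R -> R) : R :=
  inf (approx_degrees B delta f).

(* Main.v *)
Require Import Defs.
From HB Require Import structures.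
From mathcomp Require Import all_boot all_order all_algebra.
From mathcomp Require Import all_classical all_reals all_analysis.
From mathcomp Require Import ring lra.
From Stdlib Require Import Lia.
From mathcomp Require Import zify.
Import Order.TTheory GRing.Theory Num.Theory.
Local Open Scope classical_set_scope.
Local Open Scope ring_scope.



Section Cheb.
Variable R : realType.

Fixpoint chebp (n : nat) : {poly R} * {poly R} :=
  match n with
  | 0%N => (1, 'X)
  | m.+1 => ((chebp m).2, 2%:P * 'X * (chebp m).2 - (chebp m).1)
  end.
Definition cheb n := (chebp n).1.

Lemma cheb0 : cheb 0 = 1. Proof. by []. Qed.
Lemma cheb1 : cheb 1 = 'X. Proof. by []. Qed.
Lemma chebSS n : cheb n.+2 = 2%:P * 'X * cheb n.+1 - cheb n.
Proof. by []. Qed.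

Lemma cheb_ind (P : nat -> Prop) : P 0%N -> P 1%N ->
  (forall n, P n -> P n.+1 -> P n.+2) -> forall n, P n.
Proof.
move=> h0 h1 hS n; suff: P n /\ P n.+1 by case.
by elim: n => [|n [a b]]; split => //; apply: hS.
Qed.

Lemma size_cheb n : (size (cheb n) <= n.+1)%N.
Proof.
elim/cheb_ind: n => [|| n h1 h2]; first by rewrite cheb0 size_poly1.
  by rewrite cheb1 size_polyX.
rewrite chebSS; apply: (leq_trans (size_polyD _ _)); rewrite size_polyN geq_max.
have hA := size_polyMleq (2%:P * 'X) (cheb n.+1).
have hB := size_polyMleq (2%:P : {poly R}) 'X.
have hC := size_polyC_leq1 (2 : R).
rewrite size_polyX in hB.
move: hA hB hC h1 h2.
move: (size (2%:P : {poly R})) (size (2%:P * 'X : {poly R})) => a b.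
move: (size (cheb n.+1)) (size (cheb n)) (size (2%:P * 'X * cheb n.+1)) => c d e.
move=> *; apply/andP; split; lia.
Qed.

Lemma cheb_cos n t : (cheb n).[cos t] = cos (n%:R * t).
Proof.
elim/cheb_ind: n => [|| n h1 h2].
- by rewrite cheb0 hornerC mul0r cos0.
- by rewrite cheb1 hornerX mul1r.
rewrite chebSS !hornerE h1 h2.
have e1 : n.+2%:R * t = n.+1%:R * t + t by rewrite -addn1 natrD; ring.
have e2 : n%:R * t = n.+1%:R * t - t by rewrite -addn1 natrD; ring.
rewrite e1 e2 !cosD cosN sinN; ring.
Qed.

Lemma cheb_hyp n u : u != 0 ->
  (cheb n).[(u + u^-1) / 2] = (u ^+ n + u ^- n) / 2.
Proof.
move=> u0.
elim/cheb_ind: n => [|| n h1 h2].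
- by rewrite cheb0 hornerC expr0 invr1; field.
- by rewrite cheb1 hornerX expr1.
rewrite chebSS hornerD hornerN !hornerM hornerC hornerX h1 h2 !exprS !invfM.
have w0 := expf_neq0 n u0; move: (u ^+ n) w0 => w w0; field; by rewrite w0 u0.
Qed.

Definition lpoly (s : seq nat) (x : nat -> R) (j : nat) : {poly R} :=
  \prod_(k <- s | k != j) ('X - (x k)%:P).

Lemma size_lpoly s x j : j \in s -> (size (lpoly s x j) <= size s)%N.
Proof.
move=> js; rewrite /lpoly -big_filter size_prod_XsubC size_filter.
have := count_predC (fun i : nat => i != j) s.
have : (0 < count (predC (fun i : nat => i != j)) s)%N.
  rewrite -has_count; apply/hasP; exists j => //=; by rewrite negbK.
move=> h1 h2; apply: (leq_trans _ (eq_leq h2)); by rewrite -addn1 leq_add2l.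
Qed.

Lemma lpoly_eval s x j y :
  (lpoly s x j).[y] = \prod_(k <- s | k != j) (y - x k).
Proof.
rewrite /lpoly horner_prod; apply: eq_bigr => k _; by rewrite hornerXsubC.
Qed.

Lemma prod_zero (s : seq nat) (F : nat -> R) j i : uniq s -> i \in s -> i != j ->
  F i = 0 -> \prod_(k <- s | k != j) F k = 0.
Proof.
move=> us iis ij Fi; rewrite -big_filter (bigD1_seq i) /= ?Fi ?mul0r //.
  by rewrite mem_filter ij.
exact: filter_uniq.
Qed.

Lemma interp (s : seq nat) (x : nat -> R) (Q : {poly R}) y :
  uniq s -> {in s &, injective x} -> (size Q <= size s)%N ->
  Q.[y] = \sum_(j <- s) Q.[x j] * (\prod_(k <- s | k != j) (y - x k))
             / (\prod_(k <- s | k != j) (x j - x k)).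
Proof.
move=> us xinj sQ.
pose den j := \prod_(k <- s | k != j) (x j - x k).
have den0 : forall j, j \in s -> den j != 0.
  move=> j js; rewrite /den prodf_seq_neq0; apply/allP => k ks; apply/implyP => kj.
  by rewrite subr_eq0; apply/eqP => /xinj => /(_ js ks) /eqP; rewrite eq_sym (negbTE kj).
pose I := \sum_(j <- s) (Q.[x j] / den j) *: lpoly s x j.
have sI : (size I <= size s)%N.
  apply: (leq_trans (size_sum _ _ _)); apply/bigmax_leqP_seq => j js _.
  exact: (leq_trans (size_scale_leq _ _) (@size_lpoly s x j js)).
have IE : forall z, I.[z] = \sum_(j <- s) Q.[x j] * (\prod_(k <- s | k != j) (z - x k)) / den j.
  move=> z; rewrite /I horner_sum; apply: eq_bigr => j _.
  by rewrite hornerZ lpoly_eval mulrAC.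
have QI : Q = I.
  apply/eqP; rewrite -subr_eq0; apply/negPn/negP => r0.
  have := max_poly_roots r0 (rs := map x s).
  rewrite size_map.
  have -> : uniq (map x s) by rewrite map_inj_in_uniq.
  have -> : all (root (Q - I)) (map x s).
    apply/allP => z /mapP [i iis ->]; rewrite /root hornerD hornerN IE.
    rewrite (bigD1_seq i) //=.
    have -> : \sum_(j <- s | j != i) Q.[x j] * (\prod_(k <- s | k != j) (x i - x k)) / den j = 0.
      apply: big1_seq => j /andP [ji js].
      rewrite (@prod_zero s (fun k => x i - x k) j i) //.
        by rewrite mulr0 mul0r.
      by rewrite eq_sym.
      by rewrite subrr.
    by rewrite addr0 -/(den i) mulfK ?den0 // subrr.
  move=> /(_ isT isT).
  have := size_polyD Q (- I); rewrite size_polyN => h1 h2.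
  have h3 : (size (Q - I)%R <= size s)%N by apply: (leq_trans h1); rewrite geq_max sQ sI.
  by rewrite ltnNge h3 in h2.
by rewrite {1}QI IE.
Qed.

Lemma sign_sq j : (-1) ^+ j * (-1) ^+ j = 1 :> R.
Proof. by rewrite -exprD addnn -mul2n exprM sqrrN expr1n expr1n. Qed.

Lemma neg_prod (f : nat -> R) (r : seq nat) : (forall k, k \in r -> f k < 0) ->
  0 < (-1) ^+ (size r) * \prod_(k <- r) f k.
Proof.
elim: r => [|a r IH] h; first by rewrite big_nil expr0 mulr1.
rewrite big_cons /= exprS.
have -> : -1 * (-1) ^+ size r * (f a * \prod_(j <- r) f j) =
   (- f a) * ((-1) ^+ size r * \prod_(j <- r) f j) by ring.
apply: mulr_gt0; first by rewrite oppr_gt0; apply: h; rewrite in_cons eqxx.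
by apply: IH => k kr; apply: h; rewrite in_cons kr orbT.
Qed.

Lemma sign_prod (f : nat -> R) j m : (j < m)%N ->
  (forall k, (k < j)%N -> f k < 0) -> (forall k, (j < k < m)%N -> 0 < f k) ->
  0 < (-1) ^+ j * \prod_(k <- iota 0 m | k != j) f k.
Proof.
move=> jm hneg hpos.
have -> : m = (j + (m - j).-1.+1)%N by lia.
rewrite iotaD big_cat /= add0n /= big_cons eqxx /=.
have -> : \prod_(k <- iota 0 j | k != j) f k = \prod_(k <- iota 0 j) f k.
  rewrite -big_filter; congr (\prod_(k <- _) _); apply/all_filterP.
  apply/allP => k; rewrite mem_iota add0n. move=> /andP [_ kj]. by rewrite neq_ltn kj.
rewrite mulrA; apply: mulr_gt0.
  have := @neg_prod f (iota 0 j); rewrite size_iota; apply.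
  by move=> k; rewrite mem_iota add0n => /andP [_ kj]; apply: hneg.
rewrite big_seq_cond; apply: prodr_gt0 => k /andP [kr _]; apply: hpos.
move: kr; rewrite mem_iota; lia.
Qed.

Definition node n k : R := cos (k%:R * pi / n%:R).

Lemma node_lt n k k' : (k < k')%N -> (k' <= n)%N -> node n k' < node n k.
Proof.
move=> kk kn; have n0 : (0 < n)%N by lia.
have n0R : (0 : R) < n%:R by rewrite ltr0n.
rewrite /node ltr_cos ?in_itv /=.
- by rewrite ltr_pM2r ?invr_gt0 // ltr_pM2r ?pi_gt0 // ltr_nat.
- rewrite divr_ge0 ?mulr_ge0 ?pi_ge0 ?ler0n //=.
  rewrite ler_pdivrMr // mulrC ler_pM2l ?pi_gt0 // ler_nat; lia.
- rewrite divr_ge0 ?mulr_ge0 ?pi_ge0 ?ler0n //=.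
  rewrite ler_pdivrMr // mulrC ler_pM2l ?pi_gt0 // ler_nat; lia.
Qed.

Lemma cheb_node n j : (0 < n)%N -> (cheb n).[node n j] = (-1) ^+ j.
Proof.
move=> n0; rewrite /node cheb_cos.
  have -> : n%:R * (j%:R * pi / n%:R) = 0 + (pi : R) *+ j.
  rewrite add0r -mulr_natl; field; by rewrite pnatr_eq0 -lt0n.
by rewrite (alternatingn (@cosDpi R)) cos0 mulr1.
Qed.

Lemma cheb_bound n (Q : {poly R}) (M y : R) : (0 < n)%N -> (size Q <= n.+1)%N ->
  (forall t, -1 <= t <= 1 -> `|Q.[t]| <= M) -> 1 <= y ->
  `|Q.[y]| <= M * (cheb n).[y].
Proof.
move=> n0 sQ hQ y1.
pose s := iota 0 n.+1.
have us : uniq s by apply: iota_uniq.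
have ss : size s = n.+1 by rewrite size_iota.
have xinj : {in s &, injective (node n)}.
  move=> a b; rewrite !mem_iota !add0n => ha hb hab.
  case: (ltngtP a b) => // h.
    by have := @node_lt n a b h ltac:(lia); rewrite hab ltxx.
  by have := @node_lt n b a h ltac:(lia); rewrite hab ltxx.
pose num j := \prod_(k <- s | k != j) (y - node n k).
pose den j := \prod_(k <- s | k != j) (node n j - node n k).
have num0 : forall j, 0 <= num j.
  move=> j; apply: prodr_ge0 => k _; rewrite subr_ge0.
  by apply: (le_trans (cos_le1 _)).
have den0 : forall j, j \in s -> 0 < (-1) ^+ j * den j.
  move=> j; rewrite mem_iota add0n /= => jn; apply: sign_prod => //.
    by move=> k kj; rewrite subr_lt0; apply: node_lt => //; lia.
  by move=> k /andP [jk kn]; rewrite subr_gt0; apply: node_lt => //; lia.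
pose a j := (-1) ^+ j * (num j / den j).
have a0 : forall j, j \in s -> 0 <= a j.
  move=> j js; have hd := den0 j js.
  have -> : a j = num j / ((-1) ^+ j * den j).
    rewrite /a invfM.
    have -> : ((-1) ^+ j)^-1 = (-1) ^+ j :> R.
      have sn : (-1) ^+ j != 0 :> R by rewrite signr_eq0.
      by apply: (mulIf sn); rewrite mulVf // sign_sq.
    by rewrite mulrCA mulrA.
  by apply: divr_ge0 => //; apply: ltW.
have na : forall j, j \in s -> `|num j / den j| = a j.
  move=> j js; rewrite -(ger0_norm (a0 j js)) /a (normrM ((-1)^+j)) normrX normrN1 expr1n mul1r //.
have hQy := @interp s (node n) Q y us xinj.
rewrite hQy ?ss //.
have hTy := @interp s (node n) (cheb n) y us xinj.
rewrite hTy ?ss ?size_cheb //.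
rewrite mulr_sumr; apply: (le_trans (ler_norm_sum _ _ _)).
rewrite big_seq [X in _ <= X]big_seq; apply: ler_sum => j js.
rewrite -mulrA normrM na // cheb_node // -mulrA -/(a j) mulrC.
rewrite [X in _ <= X]mulrC; apply: ler_wpM2l; first exact: a0.
apply: hQ; rewrite /node cos_le1 cos_geN1 //.
Qed.
End Cheb.



Section Key.
Variable R : realType.

Lemma key (B d eta : R) (p : {poly R}) : 0 < d < 1/4 -> eta < d -> 1 <= B ->
  (forall x, 0 <= x <= B -> `|p.[x] - expR (- x)| <= eta) -> (1 < size p)%N ->
  Num.sqrt (ln (2/d) / B) < 1 ->
  ln (d^-1) * (1 - Num.sqrt (ln (2/d) / B)) <=
    ((size p).-1)%:R * (2 * Num.sqrt (ln (2/d) / B)).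
Proof.
move=> /andP [d0 d14] etad B1 hp sp.
set s := ln (2/d); set r := Num.sqrt (s / B); set n := (size p).-1.
move=> r1.
have n1 : (0 < n)%N by rewrite /n; lia.
have B0 : 0 < B by lra.
have s0 : 0 < s by rewrite /s ln_gt0 // ltr_pdivlMr //; lra.
have r0 : 0 <= r by apply: sqrtr_ge0.
have rr : r ^+ 2 = s / B by rewrite sqr_sqrtr // divr_ge0 //; lra.
have sB : s < B.
  have : s / B < 1.
    rewrite -rr expr2; apply: (le_lt_trans (ler_wpM2l r0 (ltW r1))); by rewrite mulr1.
  by rewrite ltr_pdivrMr // mul1r.
have es : expR (- s) = d / 2.
  by rewrite expRN /s lnK ?invf_div // posrE divr_gt0.
have eta0 : 0 <= eta.
  have := hp 0; rewrite lexx /= => /(_ (ltW B0)); apply: le_trans; apply: normr_ge0.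
pose A : {poly R} := ((B + s) / 2)%:P - ((B - s) / 2)%:P * 'X.
have AE : forall t, A.[t] = (B + s) / 2 - (B - s) / 2 * t.
  by move=> t; rewrite /A hornerD hornerN hornerM !hornerC hornerX.
pose Q := (p - (d / 4)%:P) \Po A.
have sQ : (size Q <= n.+1)%N.
  apply: (leq_trans (size_comp_poly_leq _ _)).
  have h1 : (size (p - (d / 4)%:P)%R <= size p)%N.
    apply: (leq_trans (size_polyD _ _)); rewrite size_polyN geq_max leqnn /=.
    by apply: (leq_trans (size_polyC_leq1 _)); apply: ltnW.
  have h2 : (size A <= 2)%N.
    apply: (leq_trans (size_polyD _ _)); rewrite size_polyN geq_max.
    rewrite (leq_trans (size_polyC_leq1 _)) //=.
    by rewrite (leq_trans (size_polyMleq _ _)) // size_polyX; have := size_polyC_leq1 ((B - s) / 2); lia.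
  have : ((size (p - (d / 4)%:P)%R).-1 * (size A).-1 <= n)%N.
    rewrite /n; have : ((size A).-1 <= 1)%N by lia.
    move: ((size A).-1) => a a1; have := h1; move: (size (p - (d / 4)%:P)%R) => b; nia.
  lia.
have QE : forall t, Q.[t] = p.[A.[t]] - d / 4.
  by move=> t; rewrite /Q horner_comp hornerD hornerN hornerC.
have hQ : forall t, -1 <= t <= 1 -> `|Q.[t]| <= eta + d / 4.
  move=> t /andP [t1 t2]; rewrite QE AE.
  set x := (B + s) / 2 - (B - s) / 2 * t.
  have xs : s <= x by rewrite /x; nra.
  have xB : x <= B by rewrite /x; nra.
  have := hp x; rewrite xB andbT => /(_ ltac:(lra)) hx.
  have ex0 := expR_gt0 (- x).
  have ex1 : expR (- x) <= d / 2 by rewrite -es ler_expR; lra.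
  move: hx; rewrite !ler_norml => /andP [h1 h2]; apply/andP; split; lra.
pose u := (1 + r) / (1 - r).
have u1 : 1 <= u by rewrite /u ler_pdivlMr ?mul1r; lra.
have u0 : u != 0 by apply/eqP => u0; move: u1; rewrite u0; lra.
pose y := (B + s) / (B - s).
have yE : y = (u + u^-1) / 2.
  have sE : s = r ^+ 2 * B by rewrite rr; field; lra.
  have hB : B - r ^+ 2 * B != 0 by rewrite -sE; apply/eqP; lra.
  have h1r : 1 - r != 0 by apply/eqP; lra.
  have h1r' : 1 + r != 0 by apply/eqP; lra.
  rewrite /y /u sE; field.
  by rewrite hB h1r h1r'.
have y1 : 1 <= y by rewrite /y ler_pdivlMr; lra.
have Ay : A.[y] = 0 by rewrite AE /y; field; lra.
have hb := @cheb_bound _ _ _ _ _ n1 sQ hQ y1.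
rewrite QE Ay yE cheb_hyp // in hb.
have p0 : 1 - eta <= p.[0].
  have := hp 0; rewrite lexx /= => /(_ (ltW B0)); rewrite oppr0 expR0 ler_norml; lra.
pose v := u ^+ n.
have v1 : 1 <= v by rewrite /v exprn_ege1.
have vd : d^-1 <= v.
  rewrite leNgt; apply/negP => vd.
  have hv : v * d < 1 by rewrite -ltr_pdivlMr // div1r.
  rewrite -/v ger0_norm in hb; last by lra.
  have hb2 : (1 - eta - d / 4) * (2 * v) <= (eta + d / 4) * (v ^+ 2 + 1).
    have : (1 - eta - d/4) <= (eta + d / 4) * ((v + v^-1) / 2) by lra.
    have vv : v * v^-1 = 1 by rewrite mulfV //; apply/eqP => v0; move: v1; rewrite v0; lra.
    move=> h; have v2 : 0 <= 2 * v by lra.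
    have h' := ler_wpM2r v2 h.
    have vn0 : v != 0 by apply/eqP => v0; move: v1; rewrite v0; lra.
    have ee : (eta + d/4) * ((v + v^-1)/2) * (2*v) = (eta + d/4) * (v^+2 + 1).
      by field.
    by rewrite -ee.
  have hc : (v - 1) * (v * d - 1) <= 0 by nra.
  nra.
have hln : ln (d^-1) <= n%:R * ln u.
  rewrite mulr_natl -lnXn; last by lra.
  by rewrite ler_ln // posrE ?invr_gt0 // (lt_le_trans _ vd) // invr_gt0.
have lnu : ln u <= 2 * r / (1 - r).
  have -> : u = 1 + 2 * r / (1 - r) by rewrite /u; field; lra.
  apply: le_ln1Dx; apply: (lt_le_trans (_ : -1 < 0)); first lra.
  by apply: divr_ge0; lra.
have : ln (d^-1) <= n%:R * (2 * r / (1 - r)).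
  apply: (le_trans hln); apply: ler_wpM2l => //; apply: ler0n.
rewrite mulrA ler_pdivlMr; last lra.
by [].
Qed.
End Key.



Section Ex.
Variable R : realType.

Lemma powdiff (a b : R) m : 0 <= b <= a -> a <= 1 ->
  0 <= a ^+ m - b ^+ m <= m%:R * (a - b).
Proof.
move=> /andP [b0 ba] a1; elim: m => [|m /andP [h1 h2]].
  by rewrite !expr0 subrr mul0r lexx.
have am : 0 <= a ^+ m by apply: exprn_ge0; lra.
have am1 : a ^+ m <= 1 by apply: exprn_ile1; lra.
have bm : 0 <= b ^+ m by apply: exprn_ge0.
have bm1 : b ^+ m <= 1 by apply: exprn_ile1; lra.
have -> : a ^+ m.+1 - b ^+ m.+1 = a * (a ^+ m - b ^+ m) + b ^+ m * (a - b)
  by rewrite !exprS; ring.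
rewrite -addn1 natrD mulrDl mul1r; apply/andP; split.
  apply: addr_ge0; apply: mulr_ge0; lra.
have : a * (a ^+ m - b ^+ m) <= a ^+ m - b ^+ m.
  by rewrite ler_piMl //; lra.
have : b ^+ m * (a - b) <= a - b by rewrite ler_piMl //; lra.
lra.
Qed.

Lemma exists_approx (B d : R) : 0 < d -> 1 <= B ->
  exists p : {poly R}, (1 < size p)%N /\ approx_on B d (fun x => expR (- x)) p.
Proof.
move=> d0 B1.
have [m hm] : exists m : nat, B + B ^+ 2 / d < m%:R.
  exists (Num.bound (B + B ^+ 2 / d)); apply: archi_boundP.
  apply: addr_ge0; [lra | apply: divr_ge0; [apply: sqr_ge0 | lra]].
have Bd : 0 <= B ^+ 2 / d by apply: divr_ge0; [apply: sqr_ge0 | lra].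
have m0 : (0 : R) < m%:R by lra.
have mn0 : (m%:R : R) != 0 by apply/eqP; lra.
have m1 : (0 < m)%N by rewrite -(ltr0n R).
pose c : R := (- (m%:R)^-1) ^+ m.
have c0 : c != 0 by rewrite expf_neq0 // oppr_eq0 invr_eq0.
exists (c *: ('X - (m%:R)%:P) ^+ m); split.
  by rewrite size_scale // size_exp_XsubC ltnS.
exists (B ^+ 2 / m%:R).
  rewrite ltr_pdivrMr // mulrC -ltr_pdivrMr //; lra.
move=> x /andP [x0 xB].
rewrite hornerZ horner_exp hornerXsubC /c -exprMn.
have -> : - (m%:R)^-1 * (x - m%:R) = 1 - x / m%:R by field.
set u := x / m%:R.
have u0 : 0 <= u by apply: divr_ge0; lra.
have u1 : u <= 1 by rewrite /u ler_pdivrMr //; lra.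
have -> : expR (- x) = expR (- u) ^+ m.
  by rewrite -expRM_natl /u; congr expR; field.
have ea : expR (- u) <= 1 by rewrite expR_le1; lra.
have eb : 1 - u <= expR (- u) by have := expR_ge1Dx (- u); lra.
have ec : expR (- u) - (1 - u) <= u ^+ 2.
  have e1 : 1 + u <= expR u by apply: expR_ge1Dx.
  have e2 : expR (- u) * expR u = 1 by rewrite -expRD addNr expR0.
  have e3 := expR_gt0 (- u).
  nra.
have := @powdiff (expR (- u)) (1 - u) m ltac:(lra) ea.
move=> /andP [h1 h2].
rewrite distrC ger0_norm //.
apply: (le_trans h2).
have -> : B ^+ 2 / m%:R = m%:R * ((B / m%:R) ^+ 2) by field.
apply: ler_wpM2l; first lra.
apply: (le_trans ec).
have hu : u <= B / m%:R by rewrite /u ler_pM2r ?invr_gt0.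
nra.
Qed.
End Ex.



Theorem lemma4p6 (R : realType) (B delta : nat -> R)
  (hdelta : forall k, 0 < delta k < 1 / 4)
  (hB : forall k, 1 <= B k)
  (hlim : (fun k => B k / ln ((delta k)^-1)) @ \oo --> +oo) :
  forall eps : R, 0 < eps ->
    \forall k \near \oo,
      (1 / 2 - eps) * Num.sqrt (B k * ln ((2 * delta k)^-1))
        <= dmin (B k) (delta k) (fun x => expR (- x)).
Proof.
move=> eps eps0.
pose rho := 2 * eps / (1 + 4 * eps).
have rho0 : 0 < rho by rewrite /rho divr_gt0 //; lra.
have rho1 : rho <= 2 * eps by rewrite /rho ler_pdivrMr; nra.
have rho2 : rho <= 1 / 2 by rewrite /rho ler_pdivrMr; lra.
have := hlim; rewrite cvgryPge => /(_ (2 / rho ^+ 2)).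
apply: filterS => k hk.
move: (hdelta k) (hB k) hk; set Bk := B k; set d := delta k => /andP [d0 d14] B1 hk.
set D := ln d^-1.
have l2 : 0 < ln (2 : R) by rewrite ln_gt0 //; lra.
have d4 : 4 < d^-1 by rewrite -(invrK 4) ltf_pV2 ?posrE //; lra.
have D2 : ln 2 < D by rewrite /D ltr_ln ?posrE //; lra.
have sE : ln (2 / d) = ln 2 + D by rewrite /D lnM ?posrE //; lra.
have LE : ln ((2 * d)^-1) = D - ln 2.
  rewrite invfM lnM ?posrE ?invr_gt0 //; try lra.
  rewrite lnV ?posrE // -/D; lra.
have B0 : 0 < Bk by lra.
set s := ln (2 / d).
set r := Num.sqrt (s / Bk).
have r0 : 0 <= r by apply: sqrtr_ge0.
have sD : s = ln 2 + D by rewrite /s sE.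
have s0 : 0 < s by rewrite sD; lra.
have rr : r ^+ 2 = s / Bk by rewrite sqr_sqrtr // divr_ge0 //; lra.
have rrho : r <= rho.
  have hk2 : 2 * D <= rho ^+ 2 * Bk.
    have Dp : 0 < D by lra.
    move: hk; rewrite -/D ler_pdivrMr; last by apply: exprn_gt0.
    rewrite mulrAC ler_pdivlMr //; lra.
  have : r ^+ 2 <= rho ^+ 2.
    by rewrite rr ler_pdivrMr //; lra.
  move=> h; nra.
have r1 : r < 1 by lra.
have rpos : 0 < r.
  rewrite /r sqrtr_gt0 divr_gt0 //; lra.
apply: lb_le_inf.
  have [p [sp hap]] := @exists_approx R Bk d d0 B1.
  exists ((size p).-1)%:R; exists (size p).-1 => //; exists p; split => //.
move=> _ [n [p [sp [np [eta etad hp]]]] <-].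
have hkey := @key R Bk d eta p ltac:(lra) etad B1 hp sp r1.
rewrite -/s -/r -/D np in hkey.
set a := Num.sqrt (Bk * ln ((2 * d)^-1)).
have a0 : 0 <= a by apply: sqrtr_ge0.
have aa : a ^+ 2 = Bk * (D - ln 2) by rewrite /a LE sqr_sqrtr //; nra.
have n0 : (0 : R) <= n%:R by apply: ler0n.
have [he | he] := lerP (1 / 2 - eps) 0.
  by apply: (le_trans (_ : _ <= 0)) => //; nra.
have ar : (a * r) ^+ 2 <= D ^+ 2.
  rewrite exprMn aa rr sD.
  have -> : Bk * (D - ln 2) * ((ln 2 + D) / Bk) = (D - ln 2) * (ln 2 + D).
    by field; apply/eqP; lra.
  nra.
have ar2 : a * r <= D.
  have : 0 <= a * r by apply: mulr_ge0.
  nra.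
have h3 : (1 - 2 * eps) * (a * r) <= (1 - r) * D.
  have : (1 - 2 * eps) * (a * r) <= (1 - r) * (a * r) by apply: ler_wpM2r; [apply: mulr_ge0 | lra].
  have : (1 - r) * (a * r) <= (1 - r) * D by apply: ler_wpM2l; lra.
  lra.
have h4 : ((1 / 2 - eps) * a) * (2 * r) <= n%:R * (2 * r) by nra.
by rewrite ler_pM2r in h4; lra.
Qed.
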